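(* Let $(\Omega,\mathbb{F},\mathbb{P})$ be a probability space, let $J\in\mathbb{N}$ and $S=\{0,1,\ldots,J\}$. For each $j,k\in S$, $k\neq j$, let $(\mu_{jk}(t))_{t\geq 0}$ be a stochastic process with values in $[0,\infty)$, continuous sample paths and $\mathbb{E}[\mu_{jk}(t)]<\infty$ for all $t$. Let $X=(X_t)_{t\geq 0}$ be a jump process with values in $S$ and deterministic initial state $x_0\in S$, constructed canonically (via the Ionescu-Tulcea theorem) so that, conditionally on $\mu=(\mu_{jk})_{j\neq k}$, $X$ is a Markov jump process with transition intensities $\mu$; in particular, for every $t$, $\mathbb{F}^X_{t+} \perp\!\!\!\perp \mathbb{F}^X_t \mid \sigma(X_t)\vee\mathbb{F}^\mu_\infty$, and there exist conditional transition probabilities $P^\mu_{jk}(t,T)$, depending on $\mu$ only through $(\mu(s))_{t\le s\le T}$, with $\mathbb{P}(X_T=k\mid \mathbb{F}^X_t\vee\mathbb{F}^\mu_\infty)=P^\mu_{X_t k}(t,T)$ for $0\le t<T$ and $\lim_{h\searrow 0}h^{-1}P^\mu_{jk}(t,t+h)=\mu_{jk}(t)$. Then for every $t\in[0,\infty)$, $$\mathbb{F}^{X,\mu}_{t+} \perp\!\!\!\perp \mathbb{F}^X_t \mid \sigma(X_t)\vee\mathbb{F}^\mu_t, \qquad \mathbb{F}^{\mu}_{t+} \perp\!\!\!\perp \mathbb{F}^X_t \mid \mathbb{F}^\mu_t.$$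
   Context: For a process $Z$, $\mathbb{F}^Z_t=\sigma(Z_s: s\le t)$, $\mathbb{F}^Z_\infty=\sigma(\bigcup_{t\ge0}\mathbb{F}^Z_t)$, and $\mathbb{F}^Z_{t+}=\sigma(Z_s: s>t)$ (the future information after time $t$). $\mathbb{F}^{X,\mu}$ denotes the corresponding filtrations generated jointly by $(X,\mu)$. $\mathcal{A}\vee\mathcal{B}$ is the smallest $\sigma$-algebra containing $\mathcal{A}$ and $\mathcal{B}$, and $\perp\!\!\!\perp \cdot\mid\cdot$ denotes conditional independence of $\sigma$-algebras. By the canonical construction, the conditional distribution of $(X_s)_{s\le t}$ given $\mathbb{F}^\mu_\infty$ depends on $\mu$ only through $(\mu(s))_{s\le t}$ (i.e. is $\mathbb{F}^\mu_t$-measurable). All identities hold $\mathbb{P}$-almost surely. *)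

(* Defs.v *)
From HB Require Import structures.
From mathcomp Require Import all_boot all_order all_algebra.
From mathcomp Require Import all_classical all_reals all_analysis.
Set Implicit Arguments. Unset Strict Implicit. Unset Printing Implicit Defensive.
Import Order.TTheory GRing.Theory Num.Theory.
Import numFieldNormedType.Exports.
Local Open Scope classical_set_scope.
Local Open Scope ring_scope.

Section CondIndep.
Context {R : realType} {d : measure_display} {Omega : measurableType d}.

Definition cond_prob_version (P : probability Omega R) (G : set (set Omega))
    (A : set Omega) (f : Omega -> R) : Prop :=
  [/\ (forall B : set R, measurable B -> G (f @^-1` B)),
      P.-integrable setT (EFin \o f) &
      (forall g, G g -> (\int[P]_(x in g) (f x)%:E = P (A `&` g))%E)].

Definition cond_indep (P : probability Omega R) (A B G : set (set Omega)) : Prop :=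
  forall a b, A a -> B b ->
  forall fa fb fab : Omega -> R,
    cond_prob_version P G a fa -> cond_prob_version P G b fb ->
    cond_prob_version P G (a `&` b) fab ->
    {ae P, forall w, fab w = fa w * fb w}.

Definition genX {T : Type} (X : R -> Omega -> T) (I : set R) : set (set Omega) :=
  [set A | exists s k, I s /\ A = X s @^-1` [set k]].

Definition genMu (n : nat) (mu : 'I_n -> 'I_n -> R -> Omega -> R) (I : set R)
  : set (set Omega) :=
  [set A | exists s j k (B : set R), [/\ I s, j != k, measurable B &
                                        A = mu j k s @^-1` B]].

Definition FX {T : Type} (X : R -> Omega -> T) (I : set R) := <<s genX X I >>.
Definition Fmu n (mu : 'I_n -> 'I_n -> R -> Omega -> R) (I : set R) :=
  <<s genMu mu I >>.
Definition FXmu {T : Type} n (X : R -> Omega -> T)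
  (mu : 'I_n -> 'I_n -> R -> Omega -> R) (I : set R) :=
  <<s genX X I `|` genMu mu I >>.
Definition sjoin (A B : set (set Omega)) := <<s A `|` B >>.

End CondIndep.

Definition upto {R : realType} (t : R) : set R := [set s | 0 <= s <= t].
Definition after {R : realType} (t : R) : set R := [set s | t < s].
Definition alltimes {R : realType} : set R := [set s | 0 <= s].
Definition between {R : realType} (t T : R) : set R := [set s | t <= s <= T].

(* sample path of a jump process on [0,oo): right-continuous and piecewise
   constant, with left limits (i.e. locally finitely many jumps). *)
Definition jump_path {R : realType} {T : Type} (f : R -> T) : Prop :=
  (forall t, 0 <= t -> exists2 e : R, 0 < e &
      forall s, t <= s < t + e -> f s = f t) /\
  (forall t, 0 < t -> exists2 e : R, 0 < e &
      exists v, forall s, t - e < s < t -> f s = v).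

(* Main.v *)
Require Import Defs.
From HB Require Import structures.
From mathcomp Require Import all_boot all_order all_algebra.
From mathcomp Require Import all_classical all_reals all_analysis.
From mathcomp Require Import measurable_realfun.
Import Order.TTheory GRing.Theory Num.Theory.
Import numFieldNormedType.Exports.
Local Open Scope classical_set_scope.
Local Open Scope ring_scope.
Set Implicit Arguments. Unset Strict Implicit. Unset Printing Implicit Defensive.

Section MR.
Context {R : realType} {d : measure_display} {T : measurableType d}.
Variables (P : probability T R) (a : set T) (ma : measurable a).
Let Pa_fin : (P a < +oo)%E.
Proof. by rewrite ltey_eq fin_num_measure. Qed.
Definition nuR := mfrestr ma Pa_fin.

Lemma nuR_dom : nuR `<< P.
Proof.
apply/null_content_dominatesP => A mA PA0; apply/eqP; rewrite eq_le measure_ge0 andbT.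
rewrite -PA0 /nuR /mfrestr /mrestr; apply: le_measure; rewrite ?inE//.
exact: measurableI.
Qed.

Lemma MR (E : set T) (f : T -> \bar R) : measurable E -> measurable_fun E f ->
  (forall x, (0 <= f x)%E) ->
  (\int[nuR]_(x in E) f x = \int[P]_(x in E `&` a) f x)%E.
Proof.
move=> mE mf f0.
rewrite -(Radon_Nikodym_SigmaFinite.change_of_variables nuR_dom f0 mE mf).
rewrite integral_mkcondr; under [RHS]eq_integral do rewrite epatch_indic.
have iRN := Radon_Nikodym_SigmaFinite.f_integrable nuR_dom.
have mRN := measurable_int _ iRN.
have mI : measurable_fun setT (fun x => (\1_a x)%:E : \bar R).
  by apply/measurable_EFinP; exact: measurable_indic.
apply: ae_eq_integral => //.
- apply: emeasurable_funM => //; exact: measurable_funTS.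
- apply: emeasurable_funM => //; exact: measurable_funTS.
apply: ae_eqe_mul2l; apply: (ae_eq_subset (subsetT E)).
apply: integral_ae_eq => // F _ mF.
rewrite -Radon_Nikodym_SigmaFinite.f_integral//; last exact: nuR_dom.
change (P (F `&` a) = \int[P]_(x in F) (EFin \o \1_a) x)%E; rewrite setIC; exact/esym/(integral_indic P mF ma).
Qed.
End MR.

Section CE.
Context {R : realType} {d : measure_display} {Omega : measurableType d}.
Variable (P : probability Omega R).
Variable gen : set (set Omega).
Hypothesis genm : gen `<=` measurable.
Local Notation OG := (g_sigma_algebraType gen).

Lemma Gm (A : set Omega) : <<s gen >> A -> measurable A.
Proof. apply: smallest_sub => //; exact: sigma_algebra_measurable. Qed.

Lemma mid : measurable_fun setT (id : Omega -> OG).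
Proof. by move=> _ B mB; rewrite setTI; exact: Gm. Qed.

Lemma mfunGO (E : set Omega) d' (T'' : measurableType d') (f : Omega -> T'') :
  <<s gen >> E -> measurable_fun (E : set OG) (f : OG -> T'') -> measurable_fun E f.
Proof. by move=> mE mf _ B mB; apply: Gm; exact: mf. Qed.

Definition PG_ (h : gen `<=` measurable) (A : set OG) : \bar R := P A.
Local Notation PG := (PG_ genm).

Let PG0 : PG set0 = 0%E. Proof. exact: measure0. Qed.
Let PG_ge0 A : (0 <= PG A)%E. Proof. exact: measure_ge0. Qed.
Let PG_sa : semi_sigma_additive PG.
Proof.
move=> F mF tF mUF; apply: (@measure_semi_sigma_additive _ _ _ P F) => //.
- by move=> n; apply: Gm; exact: mF.
- exact: Gm.
Qed.
HB.instance Definition _ := isMeasure.Build _ OG R PG PG0 PG_ge0 PG_sa.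
Let PGT : PG setT = 1%E. Proof. exact: probability_setT. Qed.
HB.instance Definition _ := Measure_isProbability.Build _ OG R PG PGT.



Lemma PG_ge0_int (E : set OG) (f : OG -> \bar R) : measurable E -> measurable_fun E f ->
  (forall x, E x -> (0 <= f x)%E) ->
  (\int[PG]_(x in E) f x = \int[P]_(x in (E : set Omega)) f x)%E.
Proof.
move=> mE mf f0; have := @ge0_integral_pushforward _ _ Omega OG R id mid P E f mE mf.
by apply => y /set_mem; exact: f0.
Qed.

Lemma PG_int (E : set OG) (f : OG -> \bar R) : measurable E -> measurable_fun E f ->
  (\int[PG]_(x in E) f x = \int[P]_(x in (E : set Omega)) f x)%E.
Proof.
move=> mE mf; rewrite integralE [RHS]integralE.
rewrite PG_ge0_int//; last exact: measurable_funepos.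
by rewrite PG_ge0_int//; exact: measurable_funeneg.
Qed.

Variable a : set Omega.
Hypothesis ma : measurable a.
Definition nuG_ (h : gen `<=` measurable) (h' : measurable a) (A : set OG) : \bar R := P (A `&` a).
Local Notation nuG := (nuG_ genm ma).
Let nuG0 : nuG set0 = 0%E. Proof. by rewrite /nuG_ set0I measure0. Qed.
Let nuG_ge0 A : (0 <= nuG A)%E. Proof. exact: measure_ge0. Qed.
Let nuG_sa : semi_sigma_additive nuG.
Proof.
move=> F mF tF mUF; rewrite /nuG_ setI_bigcupl.
apply: (@measure_semi_sigma_additive _ _ _ P (fun n => F n `&` a)) => //.
- by move=> n; apply: measurableI => //; apply: Gm; exact: mF.
- exact: trivIset_setIr.
- by rewrite -setI_bigcupl; apply: measurableI => //; exact: Gm.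
Qed.
HB.instance Definition _ := isMeasure.Build _ OG R nuG nuG0 nuG_ge0 nuG_sa.
Let nuG_fin : fin_num_fun nuG.
Proof. by move=> U mU; rewrite fin_num_measure//; apply: measurableI => //; exact: Gm. Qed.
HB.instance Definition _ := Measure_isFinite.Build _ OG R nuG nuG_fin.

Lemma nuG_dom : nuG `<< PG.
Proof.
apply/null_content_dominatesP => A mA PA0; apply/eqP; rewrite eq_le measure_ge0 andbT.
rewrite -PA0 /nuG_ /PG_; apply: le_measure; rewrite ?inE//.
- by apply: measurableI => //; exact: Gm.
- exact: Gm.
Qed.

Let RN : OG -> \bar R := Radon_Nikodym_SigmaFinite.f nuG PG.
Let RN_ge0 x : (0 <= RN x)%E := Radon_Nikodym_SigmaFinite.f_ge0 nuG_dom x.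
Let RN_fin x : RN x \is a fin_num := Radon_Nikodym_SigmaFinite.f_fin_num nuG_dom x.
Let RN_int : PG.-integrable setT RN := Radon_Nikodym_SigmaFinite.f_integrable nuG_dom.

Definition ra (x : Omega) : R := fine (RN x).

Lemma RNE : RN = EFin \o ra.
Proof. by apply/funext => x /=; rewrite /ra fineK. Qed.

Lemma ra_ge0 x : 0 <= ra x.
Proof. exact: fine_ge0. Qed.

Lemma ra_mG : measurable_fun setT (ra : OG -> R).
Proof. apply/measurable_EFinP; rewrite -RNE; exact: measurable_int RN_int. Qed.

Lemma ra_int (E : set Omega) : <<s gen >> E ->
  P (E `&` a) = (\int[P]_(x in E) (ra x)%:E)%E.
Proof.
move=> mE; have H := Radon_Nikodym_SigmaFinite.f_integral nuG_dom (mE : measurable (E : set OG)).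
have -> : P (E `&` a) = nuG E by [].
rewrite H PG_int//; last exact: measurable_funTS (measurable_int _ RN_int).
apply: eq_integral => x _; rewrite /ra fineK//; exact: RN_fin.
Qed.

Lemma ra_integrable : P.-integrable setT (EFin \o ra).
Proof.
have m1 : measurable_fun (setT : set OG) (EFin \o ra).
  by apply/measurable_EFinP; exact: ra_mG.
have m2 : measurable_fun (setT : set OG) (abse \o (EFin \o ra)).
  exact: measurableT_comp m1.
apply/integrableP; split.
  exact: (@mfunGO setT _ _ _ (@measurableT _ OG) m1).
have f0 : forall x : OG, [set: OG] x -> (0 <= (abse \o (EFin \o ra)) x)%E.
  move=> x _; exact: abse_ge0.
rewrite -(@PG_ge0_int setT (abse \o (EFin \o ra)) measurableT m2 f0).
by move: (integrableP _ _ _ RN_int) => [_]; rewrite RNE.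
Qed.

Lemma ra_PO (h : Omega -> R) : measurable_fun setT (h : OG -> R) ->
  (forall x, 0 <= h x) -> forall E, <<s gen >> E ->
  (\int[P]_(x in E) (h x * ra x)%:E = \int[P]_(x in E `&` a) (h x)%:E)%E.
Proof.
move=> mh h0 E mE.
have mh' : measurable_fun (E : set OG) (EFin \o h).
  by apply: measurable_funTS; exact/measurable_EFinP.
have H := Radon_Nikodym_SigmaFinite.change_of_variables nuG_dom (f := EFin \o h)
  (fun x => h0 x : (0 <= (EFin \o h) x)%E) (mE : measurable (E : set OG)) mh'.
have e1 : (\int[P]_(x in E) (h x * ra x)%:E =
    \int[P]_(x in E) ((EFin \o h) x * Radon_Nikodym_SigmaFinite.f nuG PG x))%E.
  by apply: eq_integral => x _; rewrite EFinM /ra fineK//; exact: RN_fin.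
rewrite e1 -PG_int//; last first.
  apply: emeasurable_funM => //; exact: measurable_funTS (measurable_int _ RN_int).
rewrite H.
have mhO : measurable_fun E (EFin \o h) by exact: (@mfunGO E _ _ (EFin \o h)).
have h0' : forall x, (0 <= (EFin \o h) x)%E by move=> x; rewrite /= lee_fin.
rewrite -(@MR _ _ _ P a ma E (EFin \o h) (Gm mE) mhO h0').
by rewrite (@ge0_integral_pushforward _ _ Omega OG R id mid (nuR P ma) E (EFin \o h) mE mh').
Qed.
End CE.

Section Versions.
Context {R : realType} {d : measure_display} {Omega : measurableType d}.
Variable (P : probability Omega R).
Local Open Scope ereal_scope.

Lemma aeE (f h : Omega -> R) (D : set Omega) : {ae P, forall w, f w = h w} ->
  ae_eq P D (EFin \o f) (EFin \o h).
Proof. by apply: filterS => w /= -> _. Qed.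

Lemma ver_restr (G1 G2 : set (set Omega)) a f : G1 `<=` G2 ->
  cond_prob_version P G2 a f ->
  (forall B : set R, measurable B -> G1 (f @^-1` B)) ->
  cond_prob_version P G1 a f.
Proof. by move=> G12 [_ fi fE] mf; split => // g /G12; exact: fE. Qed.

Variable gen : set (set Omega).
Hypothesis genm : gen `<=` measurable.
Local Notation OG := (g_sigma_algebraType gen).
Local Notation Ver := (cond_prob_version P <<s gen >>).

Lemma ver_mG a f : Ver a f -> measurable_fun setT (f : OG -> R).
Proof. by case=> mf _ _ _ B mB; rewrite setTI; exact: mf. Qed.

Lemma ver_mO a f : Ver a f -> measurable_fun setT f.
Proof.
move=> /ver_mG mf; apply: (@mfunGO _ _ _ genm setT _ _ f) => //.
exact: (@measurableT _ OG).
Qed.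

Lemma mG_mO (f : Omega -> R) (E : set Omega) : measurable_fun setT (f : OG -> R) ->
  <<s gen >> E -> measurable_fun E (EFin \o f).
Proof.
move=> mf mE; apply: (@mfunGO _ _ _ genm E _ _ (EFin \o f)) => //.
by apply: measurable_funTS; exact/measurable_EFinP.
Qed.

Lemma ver_ra a (ma : measurable a) : Ver a (ra P genm ma).
Proof.
split.
- by move=> B mB; have := ra_mG P genm ma measurableT mB; rewrite setTI.
- exact: ra_integrable.
- by move=> g mg; rewrite setIC; exact/esym/ra_int.
Qed.

Lemma uniqG (f h : Omega -> R) : measurable_fun setT (f : OG -> R) ->
  measurable_fun setT (h : OG -> R) -> P.-integrable setT (EFin \o f) ->
  (forall g, <<s gen >> g ->
     \int[P]_(x in g) (f x)%:E = \int[P]_(x in g) (h x)%:E) ->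
  {ae P, forall w, f w = h w}.
Proof.
move=> mf mh fi fh.
have mf' : measurable_fun (setT : set OG) (EFin \o f) by exact/measurable_EFinP.
have mh' : measurable_fun (setT : set OG) (EFin \o h) by exact/measurable_EFinP.
have m2 : measurable_fun (setT : set OG) (abse \o (EFin \o f)) by exact: measurableT_comp.
have iG : (PG_ P genm).-integrable setT (EFin \o f).
  apply/integrableP; split => //.
  have f0 : forall x : OG, [set: OG] x -> (0 <= (abse \o (EFin \o f)) x)%E.
    by move=> x _; exact: abse_ge0.
  rewrite (@PG_ge0_int _ _ _ P gen genm setT (abse \o (EFin \o f)) measurableT m2 f0).
  by case/integrableP: fi.
have H : ae_eq (PG_ P genm) setT (EFin \o f) (EFin \o h).
  apply: (@integral_ae_eq _ OG R (PG_ P genm) setT measurableT _ _ iG mh').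
  move=> E _ mE; rewrite !PG_int//; first exact: fh.
  - exact: measurable_funTS.
  - exact: measurable_funTS.
case: H => N [mN PN0 sN]; exists N; split.
- exact: (Gm genm mN).
- exact: PN0.
- by move=> w /= nfh; apply: sN => /= /(_ I) [] /nfh.
Qed.

Lemma uniqV a f h : Ver a f -> Ver a h -> {ae P, forall w, f w = h w}.
Proof.
move=> vf vh; apply: uniqG; [exact: ver_mG vf|exact: ver_mG vh| by case: vf|].
by move=> g mg; case: vf => _ _ ->//; case: vh => _ _ ->.
Qed.

Lemma ver_ae a f (h : Omega -> R) : Ver a f -> measurable_fun setT (h : OG -> R) ->
  {ae P, forall w, f w = h w} -> Ver a h.
Proof.
move=> vf mh fh; have mfO := ver_mO vf.
have mhO : measurable_fun setT h := @mfunGO _ _ _ genm setT _ _ h (@measurableT _ OG) mh.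
split.
- by move=> B mB; have := mh measurableT B mB; rewrite setTI.
- apply/integrableP; split; first exact/measurable_EFinP.
  case: vf => _ /integrableP[_ +] _; apply: le_lt_trans; rewrite le_eqVlt; apply/orP; left; apply/eqP.
  apply: ae_eq_integral => //.
  + apply: measurableT_comp => //; exact/measurable_EFinP.
  + apply: measurableT_comp => //; exact/measurable_EFinP.
  + by apply: filterS fh => w /= -> _.
- move=> g mg; have mfG := ver_mG vf; case: vf => _ _ <-//; apply: ae_eq_integral.
  + exact: (Gm genm mg).
  + exact: mG_mO mh mg.
  + exact: mG_mO mfG mg.
  + by apply: filterS fh => w /= -> _.
Qed.

Lemma ver_PO a b f1 f2 (ma : measurable a) (mb : measurable b) :
  Ver a f1 -> Ver b f2 -> forall g, <<s gen >> g ->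
  \int[P]_(x in g) (f1 x * f2 x)%:E = \int[P]_(x in a `&` g) (f2 x)%:E.
Proof.
move=> v1 v2 g mg.
have e1 := uniqV v1 (ver_ra ma).
have e2 := uniqV v2 (ver_ra mb).
have mra := ra_mG P genm ma; have mrb := ra_mG P genm mb.
have mf1 := ver_mG v1; have mf2 := ver_mG v2.
have mg' := Gm genm mg.
transitivity (\int[P]_(x in g) (ra P genm mb x * ra P genm ma x)%:E).
  apply: ae_eq_integral => //.
  - exact: (mG_mO (measurable_funM mf1 mf2) mg).
  - exact: (mG_mO (measurable_funM mrb mra) mg).
  - by apply: filterS2 e1 e2 => w /= -> -> _; rewrite mulrC.
rewrite (ra_PO P genm ma mrb (@ra_ge0 _ _ _ P _ genm _ mb) mg) setIC.
apply: ae_eq_integral => //.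
- exact: measurableI.
- exact: (measurable_funS mg' (@subIsetr _ a g) (mG_mO mrb mg)).
- exact: (measurable_funS mg' (@subIsetr _ a g) (mG_mO mf2 mg)).
- by apply: filterS e2 => w /= -> _.
Qed.

End Versions.


Section MIU.
Context {R : realType} {d : measure_display} {Omega : measurableType d}.
Variable (P : probability Omega R).
Variable gen : set (set Omega).
Hypothesis genm : gen `<=` measurable.
Local Notation OG := (g_sigma_algebraType gen).
Local Open Scope ereal_scope.
Variables f1 f2 : Omega -> R.
Hypotheses (f1_0 : forall x, (0 <= f1 x)%R) (f2_0 : forall x, (0 <= f2 x)%R).
Hypotheses (if1 : P.-integrable setT (EFin \o f1)) (if2 : P.-integrable setT (EFin \o f2)).

Definition m1 (E : set OG) := \int[P]_(x in E) (f1 x)%:E.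
Definition m2 (E : set OG) := \int[P]_(x in E) (f2 x)%:E.

Let m10 : m1 set0 = 0. Proof. exact: integral_set0. Qed.
Let m20 : m2 set0 = 0. Proof. exact: integral_set0. Qed.
Let m1_ge0 A : 0 <= m1 A. Proof. by apply: integral_ge0 => x _; rewrite lee_fin. Qed.
Let m2_ge0 A : 0 <= m2 A. Proof. by apply: integral_ge0 => x _; rewrite lee_fin. Qed.
Let m1_sa : semi_sigma_additive m1.
Proof.
move=> F mF tF mUF.
apply: (@semi_sigma_additive_nng_induced _ Omega R P (EFin \o f1)) => //.
- exact: measurable_int if1.
- by move=> n; exact: (Gm genm (mF n)).
- exact: (Gm genm mUF).
Qed.
Let m2_sa : semi_sigma_additive m2.
Proof.
move=> F mF tF mUF.
apply: (@semi_sigma_additive_nng_induced _ Omega R P (EFin \o f2)) => //.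
- exact: measurable_int if2.
- by move=> n; exact: (Gm genm (mF n)).
- exact: (Gm genm mUF).
Qed.
HB.instance Definition _ := isMeasure.Build _ OG R m1 m10 m1_ge0 m1_sa.
HB.instance Definition _ := isMeasure.Build _ OG R m2 m20 m2_ge0 m2_sa.

Lemma MIU (Pi : set (set Omega)) : <<s Pi >> = <<s gen >> -> setI_closed Pi ->
  Pi setT -> (forall p, Pi p -> m1 p = m2 p) ->
  forall E, <<s gen >> E -> m1 E = m2 E.
Proof.
move=> PiG PiI PiT e12 E mE.
apply: (@measure_unique _ R OG Pi (fun _ => setT) (esym PiG) PiI) => //.
- by rewrite bigcup_const.
- move=> k; rewrite /m1; exact: integrable_lty if1.
Qed.
End MIU.

Section Ext.
Context {R : realType} {d : measure_display} {Omega : measurableType d}.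
Variable (P : probability Omega R).
Local Open Scope ereal_scope.

Lemma ver_ext (gen gen' Pi : set (set Omega)) (genm : gen `<=` measurable)
  (genm' : gen' `<=` measurable) b (psi : Omega -> R) (mb : measurable b) :
  <<s gen >> `<=` <<s gen' >> -> <<s Pi >> = <<s gen' >> -> setI_closed Pi -> Pi setT ->
  cond_prob_version P <<s gen >> b psi ->
  (forall p, Pi p -> \int[P]_(x in p) (psi x)%:E = P (b `&` p)) ->
  cond_prob_version P <<s gen' >> b psi.
Proof.
move=> GG' PiG PiI PiT v hp.
have vr := ver_ra P genm mb.
have e := uniqV genm v vr.
have mr := ver_mO genm vr.
have mpsi := ver_mO genm v.
have ir := ra_integrable P genm mb.
have i1 : P.-integrable setT (EFin \o \1_b) by exact: integrable_indic.
have PiG' : Pi `<=` <<s gen' >> by rewrite -PiG; exact: sub_sigma_algebra.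
have G'm := Gm genm'.
have key0 := MIU (f1 := ra P genm mb) (f2 := \1_b) genm' (ra_ge0 P genm mb)
  (fun x => (ltac:(by rewrite indicE ler0n) : (0 <= \1_b x :> R)%R)) ir i1 PiG PiI PiT.
have eq1 : forall E, measurable E ->
    \int[P]_(x in E) (psi x)%:E = \int[P]_(x in E) (ra P genm mb x)%:E.
  move=> E mE; apply: ae_eq_integral => //.
  - by apply: measurable_funTS; exact/measurable_EFinP.
  - by apply: measurable_funTS; exact/measurable_EFinP.
  - by apply: filterS e => w /= -> _.
have eqp : forall p, Pi p -> \int[P]_(x in p) (ra P genm mb x)%:E = \int[P]_(x in p) (\1_b x)%:E.
  move=> p Pp; rewrite -eq1; last exact: G'm (PiG' _ Pp).
  rewrite hp// integral_indic//; exact: G'm (PiG' _ Pp).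
have key := key0 eqp.
case: (v) => mv _ _; split.
- by move=> B mB; apply: GG'; exact: mv.
- by case: v.
- move=> g mg; rewrite eq1; last exact: G'm.
  have := key _ mg; rewrite /m1 /m2 => ->.
  by rewrite integral_indic//; exact: G'm.
Qed.

Lemma ci_suff (gen A B : set (set Omega)) (genm : gen `<=` measurable) :
  A `<=` measurable -> B `<=` measurable ->
  (forall a b fb, A a -> B b -> cond_prob_version P <<s gen >> b fb ->
     forall g, <<s gen >> g -> \int[P]_(x in a `&` g) (fb x)%:E = P (a `&` b `&` g)) ->
  cond_indep P A B <<s gen >>.
Proof.
move=> Am Bm H a b Aa Bb fa fb fab va vb vab.
apply: (uniqG genm).
- exact: ver_mG vab.
- apply: measurable_funM; [exact: ver_mG va | exact: ver_mG vb].
- by case: vab.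
- move=> g mg; case: vab => _ _ ->//.
  rewrite (ver_PO genm (Am _ Aa) (Bm _ Bb) va vb mg); exact/esym/H.
Qed.
End Ext.

Section SigmaBook.
Context {d : measure_display} {Omega : measurableType d}.

Lemma sig_sub (g1 g2 : set (set Omega)) : g1 `<=` <<s g2 >> -> <<s g1 >> `<=` <<s g2 >>.
Proof. by move=> h; apply: smallest_sub => //; exact: smallest_sigma_algebra. Qed.

Lemma sigI (g : set (set Omega)) a b : <<s g >> a -> <<s g >> b -> <<s g >> (a `&` b).
Proof. move=> ha hb; exact: (@measurableI _ (g_sigma_algebraType g) a b ha hb). Qed.

Lemma sigT (g : set (set Omega)) : <<s g >> setT.
Proof. exact: (@measurableT _ (g_sigma_algebraType g)). Qed.

Definition pij (g1 g2 : set (set Omega)) :=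
  [set x | exists2 a, <<s g1 >> a & exists2 b, <<s g2 >> b & x = a `&` b].

Lemma pi_join (g1 g2 : set (set Omega)) :
  [/\ <<s pij g1 g2 >> = <<s (<<s g1 >> `|` <<s g2 >>) >>,
      setI_closed (pij g1 g2) & pij g1 g2 setT].
Proof.
split.
- apply/seteqP; split; apply: sig_sub.
  + move=> _ [a ha [b hb ->]]; apply: sigI; apply: sub_sigma_algebra; [left|right] => //.
  + move=> x [hx|hx].
    * by apply: sub_sigma_algebra; exists x => //; exists setT; [exact: sigT|rewrite setIT].
    * by apply: sub_sigma_algebra; exists setT; [exact: sigT|exists x => //; rewrite setTI].
- move=> _ _ [a ha [b hb ->]] [a' ha' [b' hb' ->]].
  exists (a `&` a'); first exact: sigI.
  by exists (b `&` b'); [exact: sigI|rewrite setIACA].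
- by exists setT; [exact: sigT|exists setT; [exact: sigT|rewrite setIT]].
Qed.

Lemma sig_m (g : set (set Omega)) : g `<=` measurable -> <<s g >> `<=` measurable.
Proof. exact: Gm. Qed.

End SigmaBook.

Unset Implicit Arguments. Set Strict Implicit.

Ltac seteq := apply/seteqP; split => ? /=; rewrite /setI /=; tauto.

Theorem lemma1 (R : realType) (d : measure_display) (Omega : measurableType d)
  (P : probability Omega R) (J : nat)
  (mu : 'I_J.+1 -> 'I_J.+1 -> R -> Omega -> R)
  (X : R -> Omega -> 'I_J.+1) (x0 : 'I_J.+1)
  (Pmu : 'I_J.+1 -> 'I_J.+1 -> R -> R -> Omega -> R) :
  (* intensities: measurable, [0,oo)-valued, continuous paths, finite mean *)
  (forall j k t, j != k -> 0 <= t -> measurable_fun setT (mu j k t)) ->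
  (forall j k t w, j != k -> 0 <= t -> 0 <= mu j k t w) ->
  (forall j k w, j != k ->
     {within `[0, +oo[, continuous (fun t => mu j k t w)}) ->
  (forall j k t, j != k -> 0 <= t ->
     (\int[P]_w (mu j k t w)%:E < +oo)%E) ->
  (* X: jump process with values in S = {0,...,J}, X_0 = x0 *)
  (forall t k, 0 <= t -> measurable (X t @^-1` [set k])) ->
  (forall w, X 0 w = x0) ->
  (forall w, jump_path (fun t => X t w)) ->
  (* conditional Markov property given F^mu_oo *)
  (forall t, 0 <= t ->
     cond_indep P (FX X (after t)) (FX X (upto t))
       (sjoin (FX X [set t]) (Fmu mu alltimes))) ->
  (* conditional transition probabilities P^mu_jk(t,T) *)
  (forall j k t T, 0 <= t < T ->
     forall B : set R, measurable B ->
       Fmu mu (between t T) (Pmu j k t T @^-1` B)) ->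
  (forall k t T, 0 <= t < T ->
     cond_prob_version P (sjoin (FX X (upto t)) (Fmu mu alltimes))
       (X T @^-1` [set k]) (fun w => Pmu (X t w) k t T w)) ->
  (forall j k t, j != k -> 0 <= t ->
     {ae P, forall w,
       (fun h => Pmu j k t (t + h) w / h) @ 0^'+ --> mu j k t w}) ->
  (* canonical construction: the conditional law of (X_s)_{s<=t} given
     F^mu_oo is F^mu_t-measurable *)
  (forall t, 0 <= t -> forall A, FX X (upto t) A ->
     exists f, cond_prob_version P (Fmu mu alltimes) A f /\
       (forall B : set R, measurable B -> Fmu mu (upto t) (f @^-1` B))) ->
  forall t : R, 0 <= t ->
    cond_indep P (FXmu X mu (after t)) (FX X (upto t))
      (sjoin (FX X [set t]) (Fmu mu (upto t))) /\
    cond_indep P (Fmu mu (after t)) (FX X (upto t)) (Fmu mu (upto t)).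
Proof.
move=> mmu _ _ _ mX _ _ Markov _ _ _ canon t t0.
have hgX : forall I, I `<=` [set s | 0 <= s] -> genX X I `<=` measurable.
  by move=> I hI _ [s [k [Is ->]]]; exact: mX (hI s Is).
have hgM : forall I, I `<=` [set s | 0 <= s] -> genMu mu I `<=` measurable.
  move=> I hI _ [s [j [k [B [Is jk mB ->]]]]].
  by have := mmu j k s jk (hI s Is) measurableT B mB; rewrite setTI.
have monX : forall I1 I2, I1 `<=` I2 -> genX X I1 `<=` genX X I2.
  by move=> I1 I2 I12 _ [s [k [Is ->]]]; exists s, k; split => //; exact: I12.
have monM : forall I1 I2, I1 `<=` I2 -> genMu mu I1 `<=` genMu mu I2.
  by move=> I1 I2 I12 _ [s [j [k [B [Is jk mB ->]]]]]; exists s, j, k, B; split => //; exact: I12.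
have upto0 : upto t `<=` [set s | 0 <= s] by move=> s /andP[].
have t0' : [set t] `<=` [set s | 0 <= s] by move=> s ->.
have after0 : after t `<=` [set s | 0 <= s].
  by move=> s; rewrite /after /= => ts; exact: le_trans t0 (ltW ts).
have all0 : @alltimes R `<=` [set s | 0 <= s] by [].
have tupto : [set t] `<=` upto t by move=> s ->; rewrite /upto /= t0 lexx.
pose gU := genX X (upto t); pose gXt := genX X [set t]; pose gA := genX X (after t).
pose gN := genMu mu (upto t); pose gM := genMu mu alltimes; pose gAm := genMu mu (after t).
have gUm : gU `<=` measurable := hgX _ upto0.
have gXtm : gXt `<=` measurable := hgX _ t0'.
have gAm_ : gA `<=` measurable := hgX _ after0.
have gNm : gN `<=` measurable := hgM _ upto0.
have gMm : gM `<=` measurable := hgM _ all0.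
have gAmm : gAm `<=` measurable := hgM _ after0.
have um : forall g1 g2 : set (set Omega), g1 `<=` measurable -> g2 `<=` measurable ->
    <<s g1 >> `|` <<s g2 >> `<=` measurable.
  by move=> g1 g2 h1 h2 A [] hA; [exact: (@sig_m _ _ g1 h1 A hA)|exact: (@sig_m _ _ g2 h2 A hA)].
have NM : <<s gN >> `<=` <<s gM >>.
  apply: sig_sub => A hA; apply: sub_sigma_algebra; exact: (monM _ _ upto0).
have AmM : <<s gAm >> `<=` <<s gM >>.
  apply: sig_sub => A hA; apply: sub_sigma_algebra; exact: (monM _ _ after0).
have XtU : <<s gXt >> `<=` <<s gU >>.
  apply: sig_sub => A hA; apply: sub_sigma_algebra; exact: (monX _ _ tupto).
have canonN : forall u, <<s gU >> u -> exists f,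
    cond_prob_version P <<s gM >> u f /\ cond_prob_version P <<s gN >> u f.
  move=> u hu; have [f [vf mf]] := canon t t0 u hu.
  by exists f; split => //; exact: ver_restr NM vf mf.
have KNM : forall u fu, <<s gU >> u -> cond_prob_version P <<s gN >> u fu ->
    forall m, <<s gM >> m -> (\int[P]_(x in m) (fu x)%:E = P (u `&` m))%E.
  move=> u fu hu vu m hm; have [f [vM vN]] := canonN u hu.
  have e := uniqV gNm vu vN.
  have mm := @sig_m _ _ gM gMm m hm.
  have m1 : measurable_fun m (EFin \o fu).
    exact: measurable_funTS ((measurable_EFinP _ _).2 (ver_mO gNm vu)).
  have m2 : measurable_fun m (EFin \o f).
    exact: measurable_funTS ((measurable_EFinP _ _).2 (ver_mO gMm vM)).
  case: (vM) => _ _ <-//; apply: ae_eq_integral;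
    [done| first [exact: m1|exact: m2] | first [exact: m1|exact: m2] | idtac].
  by apply: filterS e => w /= -> _.
split; last first.
  rewrite /Fmu /FX.
  apply: (ci_suff gNm (sig_m gAmm) (sig_m gUm)) => a b fb ha hb vb g hg.
  rewrite (KNM b fb hb vb (a `&` g)); last exact: sigI (AmM _ ha) (NM _ hg).
  by congr (P _); seteq.
pose gG1 := <<s gXt >> `|` <<s gN >>.
pose gH := <<s gXt >> `|` <<s gM >>.
pose gUN := <<s gU >> `|` <<s gN >>.
pose gW := <<s gA >> `|` <<s gH >>.
have gG1m : gG1 `<=` measurable := um _ _ gXtm gNm.
have gHm : gH `<=` measurable := um _ _ gXtm gMm.
have gUNm : gUN `<=` measurable := um _ _ gUm gNm.
have gWm : gW `<=` measurable.
  by move=> A [] hA; [exact: (@sig_m _ _ gA gAm_ A hA)|exact: (@sig_m _ _ gH gHm A hA)].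
have NUN : <<s gN >> `<=` <<s gUN >> by move=> A hA; apply: sub_sigma_algebra; right.
have UUN : <<s gU >> `<=` <<s gUN >> by move=> A hA; apply: sub_sigma_algebra; left.
have NG1 : <<s gN >> `<=` <<s gG1 >> by move=> A hA; apply: sub_sigma_algebra; right.
have XtG1 : <<s gXt >> `<=` <<s gG1 >> by move=> A hA; apply: sub_sigma_algebra; left.
have G1UN : <<s gG1 >> `<=` <<s gUN >>.
  by apply: sig_sub => A [] hA; [exact: UUN (XtU _ hA)|exact: NUN].
have G1H : <<s gG1 >> `<=` <<s gH >>.
  apply: sig_sub => A [] hA; apply: sub_sigma_algebra; [by left|right; exact: NM].
have MH : <<s gM >> `<=` <<s gH >> by move=> A hA; apply: sub_sigma_algebra; right.
have XtH : <<s gXt >> `<=` <<s gH >> by move=> A hA; apply: sub_sigma_algebra; left.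
have HW : <<s gH >> `<=` <<s gW >> by move=> A hA; apply: sub_sigma_algebra; right.
have AW : <<s gA >> `<=` <<s gW >> by move=> A hA; apply: sub_sigma_algebra; left.
have CC : forall m (mm : measurable m), <<s gM >> m ->
    cond_prob_version P <<s gUN >> m (ra P gNm mm).
  move=> m mm hm.
  have [PiE PiI PiT] := pi_join gU gN.
  apply: (ver_ext gNm gUNm mm _ PiE PiI PiT (ver_ra P gNm mm)).
    by apply: sig_sub => A hA; apply: NUN; exact: sub_sigma_algebra.
  move=> _ [u hu [n hn ->]].
  have [fu [vM vN]] := canonN u hu.
  have mu_ := @sig_m _ _ gU gUm u hu.
  have e1 := ver_PO gNm mu_ mm vN (ver_ra P gNm mm) hn.
  have e2 := ver_PO gNm mm mu_ (ver_ra P gNm mm) vN hn.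
  rewrite -e1.
  have -> : (\int[P]_(x in n) (fu x * ra P gNm mm x)%:E =
             \int[P]_(x in n) (ra P gNm mm x * fu x)%:E)%E.
    by apply: eq_integral => x _; rewrite mulrC.
  rewrite e2; case: vM => _ _ ->; last exact: sigI hm (NM _ hn).
  by congr (P _); seteq.
have S1 : forall b fb, <<s gU >> b -> cond_prob_version P <<s gG1 >> b fb ->
    cond_prob_version P <<s gH >> b fb.
  move=> b fb hb vb.
  have mb := @sig_m _ _ gU gUm b hb.
  have [PiE PiI PiT] := pi_join gXt gM.
  apply: (ver_ext gG1m gHm mb G1H PiE PiI PiT vb).
  move=> _ [x hx [m hm ->]].
  have mm := @sig_m _ _ gM gMm m hm.
  have vUN := CC m mm hm.
  have vG1 : cond_prob_version P <<s gG1 >> m (ra P gNm mm).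
    apply: (ver_restr G1UN vUN) => B mB; apply: NG1.
    by have := ra_mG P gNm mm measurableT mB; rewrite setTI.
  have hxG := XtG1 _ hx.
  have e1 := ver_PO gG1m mm mb vG1 vb hxG.
  have e2 := ver_PO gG1m mb mm vb vG1 hxG.
  rewrite setIC -e1.
  have -> : (\int[P]_(x in x) (ra P gNm mm x * fb x)%:E =
             \int[P]_(x in x) (fb x * ra P gNm mm x)%:E)%E.
    by apply: eq_integral => w _; rewrite mulrC.
  rewrite e2; case: vUN => _ _ ->; last by apply: UUN; exact: sigI hb (XtU _ hx).
  by congr (P _); seteq.
have S2 : forall b fb, <<s gU >> b -> cond_prob_version P <<s gH >> b fb ->
    cond_prob_version P <<s gW >> b fb.
  move=> b fb hb vb.
  have mb := @sig_m _ _ gU gUm b hb.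
  have [PiE PiI PiT] := pi_join gA gH.
  have HW' : <<s gH >> `<=` <<s gW >> by apply: sig_sub => A hA; apply: HW; exact: sub_sigma_algebra.
  apply: (ver_ext gHm gWm mb HW' PiE PiI PiT vb).
  move=> _ [a1 ha1 [h hh ->]].
  have ma1 := @sig_m _ _ gA gAm_ a1 ha1.
  have mab : measurable (a1 `&` b) by exact: measurableI.
  have va1 := ver_ra P gHm ma1.
  have vab := ver_ra P gHm mab.
  have e := Markov t t0 a1 b ha1 hb _ _ _ va1 vb vab.
  rewrite -(ver_PO gHm ma1 mb va1 vb hh).
  have mh := @sig_m _ _ gH gHm h hh.
  have m1 : measurable_fun h (fun x => (ra P gHm ma1 x * fb x)%:E).
    apply: measurable_funTS; apply/measurable_EFinP.
    exact: measurable_funM (ver_mO gHm va1) (ver_mO gHm vb).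
  have m2 : measurable_fun h (EFin \o ra P gHm mab).
    exact: measurable_funTS ((measurable_EFinP _ _).2 (ver_mO gHm vab)).
  transitivity (\int[P]_(x in h) (ra P gHm mab x)%:E)%E.
    apply: ae_eq_integral;
      [done| first [exact: m1|exact: m2] | first [exact: m1|exact: m2] | idtac].
    by apply: filterS e => w /= -> _.
  case: vab => _ _ ->//.
  by congr (P _); seteq.
rewrite /FXmu /FX /Fmu /sjoin.
apply: (ci_suff gG1m).
- apply: sig_m => A [] hA; [exact: gAm_|exact: gAmm].
- exact: sig_m gUm.
move=> a b fb ha hb vb g hg.
have vW := S2 b fb hb (S1 b fb hb vb).
case: vW => _ _ ->.
  by congr (P _); seteq.
apply: sigI.
- move: a ha; apply: sig_sub => A [] hA.
  + by apply: AW; exact: sub_sigma_algebra.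
  + by apply: HW; apply: MH; apply: sub_sigma_algebra; exact: (monM _ _ after0).
- by apply: HW; apply: G1H.
Qed.
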